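(* Let $F=P_{\ell_1}\cup\cdots\cup P_{\ell_k}$ be a linear forest with $k\ge2$, $\ell_1\ge\cdots\ge\ell_k\ge2$ and $\ell_i\ne 3$ for all $i$. If $P_{2\delta_F+1}\cup P_{\delta_F+1}$ is $F$-free, then $F=2P_\ell$ for some odd $\ell$. Moreover, in that case $P_{2\delta_F+1}\cup P_{\delta_F+2}$ contains $F$ as a subgraph.
   Context: $P_m$ is the path on $m$ vertices; $G\cup H$ is disjoint union and $tG$ is $t$ disjoint copies of $G$. $\delta_F=\sum_{i=1}^k\lfloor \ell_i/2\rfloor-1$. A graph is $F$-free if it has no subgraph isomorphic to $F$. *)

(* Defs.v *)
From mathcomp Require Import all_boot.
Set Implicit Arguments. Unset Strict Implicit. Unset Printing Implicit Defensive.

(* A linear forest P_{l_0} ∪ ... ∪ P_{l_{k-1}} is encoded by the sequence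
   s = [:: l_0; ...; l_{k-1}] of path orders. *)
Definition lf_vert (s : seq nat) (v : nat * nat) : bool :=
  (v.1 < size s) && (v.2 < nth 0 s v.1).

Definition lf_edge (s : seq nat) (u v : nat * nat) : bool :=
  [&& lf_vert s u, lf_vert s v, u.1 == v.1 &
      (u.2.+1 == v.2) || (v.2.+1 == u.2)].

Definition lf_subgraph (s t : seq nat) : Prop :=
  exists f : nat * nat -> nat * nat,
    {in lf_vert s &, injective f} /\
    (forall v, lf_vert s v -> lf_vert t (f v)) /\
    (forall u v, lf_edge s u v -> lf_edge t (f u) (f v)).

Definition lf_free (t s : seq nat) : Prop := ~ lf_subgraph s t.

Definition deltaF (s : seq nat) : nat := (\sum_(l <- s) l./2) - 1.

(* Main.v *)
Require Import Defs.
From mathcomp Require Import all_boot zify.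
Set Implicit Arguments. Unset Strict Implicit.

Lemma vert2 x y (w : nat * nat) : lf_vert [:: x; y] w =
  ((w.1 == 0) && (w.2 < x)) || ((w.1 == 1) && (w.2 < y)).
Proof. by case: w => [[|[|i]] j]; rewrite /lf_vert /= ?orbF. Qed.

Lemma edge2 x y (u w : nat * nat) : lf_edge [:: x; y] u w =
  [&& lf_vert [:: x; y] u, lf_vert [:: x; y] w, u.1 == w.1 &
      (u.2.+1 == w.2) || (w.2.+1 == u.2)].
Proof. by []. Qed.

Lemma lf_mono s x y x' y' : lf_subgraph s [:: x; y] -> x <= x' -> y <= y' ->
  lf_subgraph s [:: x'; y'].
Proof.
move=> [f [fi [fv fe]]] hx hy; exists f; split=> //; split.
  move=> v /fv; rewrite !vert2; case: (f v) => [[|[|i]] j] /=; lia.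
move=> u v /fe; rewrite !edge2 !vert2.
case: (f u) => [[|[|i]] j]; case: (f v) => [[|[|i']] j'] /=; lia.
Qed.

Lemma lf_nil x y : lf_subgraph [::] [:: x; y].
Proof.
exists id; split; first by move=> u v; rewrite !unfold_in /lf_vert.
by split=> [[i j]|[i j] [i' j']]; rewrite /lf_edge /lf_vert.
Qed.

Lemma lf_cons0 a s x y : lf_subgraph s [:: x; y] -> lf_subgraph (a :: s) [:: x + a; y].
Proof.
move=> [f [fi [fv fe]]].
exists (fun v => if v.1 is i.+1 then f (i, v.2) else (0, x + v.2)); split; last split.
- move=> [[|i] j] [[|i'] j']; rewrite !unfold_in /=.
  + rewrite /lf_vert /=; move=> _ _ [E]; congr (_,_); lia.
  + move=> _ /(fv (i', j')) + E; rewrite -E vert2 /=; lia.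
  + move=> /(fv (i, j)) + _ E; rewrite E vert2 /=; lia.
  + move=> h1 h2 E; have := fi (i, j) (i', j').
    rewrite !unfold_in; move=> /(_ h1 h2 E) [-> ->] //.
- move=> [[|i] j] /=.
  + rewrite /lf_vert /=; lia.
  + move=> h; have := fv (i, j) h; rewrite !vert2; case: (f (i,j)) => [[|[|k]] l] /=; lia.
- move=> [[|i] j] [[|i'] j'] /=.
  + rewrite /lf_edge /lf_vert /=; lia.
  + by rewrite /lf_edge /= !andbF.
  + by rewrite /lf_edge /= !andbF.
  + move=> h; have := fe (i, j) (i', j') h; rewrite !edge2 !vert2.
    case: (f (i,j)) => [[|[|k]] l]; case: (f (i', j')) => [[|[|k']] l'] /=; lia.
Qed.

Lemma lf_cons1 a s x y : lf_subgraph s [:: x; y] -> lf_subgraph (a :: s) [:: x; y + a].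
Proof.
move=> [f [fi [fv fe]]].
exists (fun v => if v.1 is i.+1 then f (i, v.2) else (1, y + v.2)); split; last split.
- move=> [[|i] j] [[|i'] j']; rewrite !unfold_in /=.
  + rewrite /lf_vert /=; move=> _ _ [E]; congr (_,_); lia.
  + move=> _ /(fv (i', j')) + E; rewrite -E vert2 /=; lia.
  + move=> /(fv (i, j)) + _ E; rewrite E vert2 /=; lia.
  + move=> h1 h2 E; have := fi (i, j) (i', j').
    rewrite !unfold_in; move=> /(_ h1 h2 E) [-> ->] //.
- move=> [[|i] j] /=.
  + rewrite /lf_vert /=; lia.
  + move=> h; have := fv (i, j) h; rewrite !vert2; case: (f (i,j)) => [[|[|k]] l] /=; lia.
- move=> [[|i] j] [[|i'] j'] /=.
  + rewrite /lf_edge /lf_vert /=; lia.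
  + by rewrite /lf_edge /= !andbF.
  + by rewrite /lf_edge /= !andbF.
  + move=> h; have := fe (i, j) (i', j') h; rewrite !edge2 !vert2.
    case: (f (i,j)) => [[|[|k]] l]; case: (f (i', j')) => [[|[|k']] l'] /=; lia.
Qed.
Lemma lf_all0 v : lf_subgraph v [:: sumn v; 0].
Proof.
elim: v => [|a v IH] /=; first exact: lf_nil.
apply: lf_mono (lf_cons0 a IH) _ _; lia.
Qed.

Lemma lf_catB u v x y : lf_subgraph v [:: x; y] -> lf_subgraph (u ++ v) [:: x; y + sumn u].
Proof.
elim: u => [|a u IH] h /=; first by rewrite addn0.
apply: lf_mono (lf_cons1 a (IH h)) _ _; lia.
Qed.

Definition PP (l : nat) := (2 <= l) && (l != 3).

Lemma sumH s : sumn s = (\sum_(l <- s) l./2).*2 + count odd s.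
Proof. elim: s => [|a s IH]; rewrite ?big_nil ?big_cons //=; lia. Qed.

Lemma oddH s : all PP s -> (count odd s).*2 <= \sum_(l <- s) l./2.
Proof. elim: s => [|a s IH]; rewrite ?big_nil ?big_cons //= /PP => /andP [/andP [h1 h2] /IH]; lia. Qed.

Lemma sumT s : all PP s -> (size s).*2 + count odd s <= sumn s.
Proof. elim: s => [|a s IH] //= /andP [/andP [h1 h2] /IH]; lia. Qed.

Lemma Hge s : all PP s -> size s <= \sum_(l <- s) l./2.
Proof. elim: s => [|a s IH]; rewrite ?big_nil ?big_cons //= /PP => /andP [/andP [h1 h2] /IH]; lia. Qed.

Theorem mainTheorem5 (s : seq nat) :
  2 <= size s ->
  sorted (fun a b => b <= a) s ->
  all (fun l => (2 <= l) && (l != 3)) s ->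
  lf_free [:: (deltaF s).*2.+1; (deltaF s).+1] s ->
  (exists l, odd l /\ s = [:: l; l]) /\
  lf_subgraph s [:: (deltaF s).*2.+1; (deltaF s).+2].
Proof.
case: s => [|a [|b r]] //= _ hsort hall hfree.
have hP : all PP [:: a, b & r] by [].
case: (boolP [&& r == [::], a == b & odd a]) => [/and3P [/eqP E1 /eqP E2 oa]|hne].
  subst r b; split; first by exists a.
  move: hall => /= /andP [/andP [h1 h2] _].
  rewrite /deltaF !big_cons big_nil.
  apply: lf_mono (lf_cons0 a (lf_cons1 a (lf_nil 0 0))) _ _; lia.
exfalso; apply: hfree.
set S := \sum_(l <- [:: a, b & r]) l./2.
set N := count odd [:: a, b & r].
have hd : deltaF [:: a, b & r] = S - 1 by [].
rewrite hd.
have HS := sumH [:: a, b & r]; rewrite -/S -/N in HS.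
have HO := oddH hP; rewrite -/S -/N in HO.
move: hP => /= /andP [/andP [ha1 ha2]] /andP [/andP [hb1 hb2] hr].
have HT : (size (b::r)).*2 + count odd (b::r) <= sumn (b::r).
  by apply: sumT; rewrite /= {1}/PP hb1 hb2 hr.
rewrite /= in HT.
have Hr := Hge hr.
have SE : S = a./2 + b./2 + \sum_(l <- r) l./2 by rewrite /S !big_cons addnA.
move: hsort => /andP [hba hpath].
have hbS : b <= S.
  rewrite SE; case: (eqVneq r [::]) hne Hr => [Er|nr] hne Hr.
    rewrite Er big_nil in hne *; rewrite /= in hne.
    case: (eqVneq a b) hne => [Eab|nab] /= hne; lia.
  have : 0 < size r by case: (r) nr.
  lia.
have hall_r : all (fun c => c <= b) r.
  by apply: (order_path_min _ hpath) => x y z /= h1 h2; apply: leq_trans h2 h1.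
have NE : N = odd a + (odd b + count odd r) by [].
set t := b :: r.
have ex : exists m, N < sumn (take m t) by exists (size t); rewrite take_size /t /=; lia.
case: (ex_minnP ex) => m hm hmin.
have hmt : m <= size t by apply: hmin; rewrite take_size /t /=; lia.
have hmu : sumn (take m t) <= S.
  case: m hm hmin hmt => [|m'] hm hmin hmt; first by rewrite take0 in hm.
  rewrite (take_nth 0) // sumn_rcons in hm *.
  have hle : sumn (take m' t) <= N.
    rewrite leqNgt; apply/negP => /hmin; lia.
  case: m' hm hmin hmt hle => [|m''] hm hmin hmt hle.
    by rewrite take0 /= add0n.
  have h1 : nth 0 t m''.+1 <= b.
    rewrite /t /=; case: (ltnP m'' (size r)) => hh.
      by apply: (allP hall_r); apply: mem_nth.
    by rewrite nth_default.
  have h2 : b <= sumn (take m''.+1 t) by rewrite /t /=; lia.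
  lia.
have hsplit : sumn (take m t) + sumn (drop m t) = sumn t by rewrite -sumn_cat cat_take_drop.
have := lf_cons0 a (lf_catB (take m t) (lf_all0 (drop m t))).
rewrite cat_take_drop => hsub.
apply: lf_mono hsub _ _.
  have hst : sumn t = b + sumn r by [].
  rewrite /= in HS; lia.
lia.
Qed.
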